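(* Let $X \to Y$ be a relative cell complex in $\mathbf{PsTop}$. Then every compact subset $C$ of $Y$ intersects the interiors of only finitely many cells of $Y - X$.
   Context: A convergence space is a set with a relation between filters and points ($\lambda\to x$) such that $\lambda\to x$, $\lambda\subseteq\lambda'$ imply $\lambda'\to x$, and $\dot x\to x$; it is pseudotopological iff $\lambda\to x$ exactly when every ultrafilter containing $\lambda$ converges to $x$. Continuous maps: $\lambda\to x$ implies $f(\lambda)\to f(x)$. $\mathbf{PsTop}$ is the category of pseudotopological spaces; topological spaces (in particular $D^n$, $S^{n-1}$) are regarded as pseudotopological by $\lambda\to x$ iff $\lambda$ contains the neighbourhood filter of $x$; subspaces carry the induced structure ($\lambda\to x$ in $U$ iff the filter generated in $X$ converges to $x$), and colimits carry final structures in $\mathbf{PsTop}$. A subset is compact iff, with its subspace structure, every ultrafilter on it converges. $Y$ is obtained from $X$ by attaching a cell if $X$ is a subspace of $Y$ and there is a pushout square in $\mathbf{PsTop}$ with $S^{n-1}\to X$, $S^{n-1}\hookrightarrow D^n$, $D^n \to Y$, $X \to Y$, for some $n\geq 0$ ($S^{-1}=\emptyset$, $D^0$ a point). A continuous map $f : X \to Y$ is a relative cell complex if it is an inclusion and $Y$ is constructed from $X$ by a (possibly transfinite) sequence of cell attachments (with colimits at limit stages). The interior of a cell is the image of $D^n\setminus S^{n-1}$ in $Y$; the cells of $Y - X$ are those attached in this construction. *)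

(* Defs.v *)
From HB Require Import structures.
From mathcomp Require Import all_boot all_order all_algebra.
From mathcomp Require Import all_classical all_reals topology normedtype.
Set Implicit Arguments. Unset Strict Implicit. Unset Printing Implicit Defensive.
Import Order.TTheory GRing.Theory Num.Theory.
Import numFieldNormedType.Exports.
Local Open Scope classical_set_scope.
Local Open Scope ring_scope.

Definition pfilter {T : Type} (F : set_system T) : Prop :=
  F setT /\ ~ F set0 /\
  (forall A B, F A -> F B -> F (A `&` B)) /\
  (forall A B, A `<=` B -> F A -> F B).

Definition ultra {T : Type} (F : set_system T) : Prop :=
  pfilter F /\ forall G, pfilter G -> F `<=` G -> G = F.

Definition principal {T : Type} (x : T) : set_system T := [set A | A x].

Definition imf {T U : Type} (f : T -> U) (F : set_system T) : set_system U :=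
  [set B | F (f @^-1` B)].

(** A space is represented by (A, c) where A : set T is its underlying set and
   c F x means "F -> x".  A filter on A is identified with the filter on T it
   generates, i.e. with a proper filter on T containing A. *)
Definition convT (T : Type) := set_system T -> T -> Prop.

Definition is_conv {T : Type} (A : set T) (c : convT T) : Prop :=
  (forall F x, c F x -> pfilter F /\ F A /\ A x) /\
  (forall F G x, c F x -> pfilter G -> F `<=` G -> c G x) /\
  (forall x, A x -> c (principal x) x).

Definition is_pstop {T : Type} (A : set T) (c : convT T) : Prop :=
  is_conv A c /\
  forall F x, pfilter F -> F A -> A x ->
    (c F x <-> (forall U, ultra U -> F `<=` U -> c U x)).

Definition cont {T U : Type} (A : set T) (c : convT T) (B : set U) (d : convT U)
  (f : T -> U) : Prop :=
  (forall x, A x -> B (f x)) /\ (forall F x, c F x -> d (imf f F) (f x)).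

Definition subsp {T : Type} (c : convT T) (B : set T) : convT T :=
  fun F x => F B /\ B x /\ c F x.

Definition topc {V : topologicalType} (D : set V) : convT V :=
  fun F x => pfilter F /\ F D /\ D x /\ nbhs x `<=` F.

Definition sqnorm {R : realType} {n : nat} (v : 'rV[R]_n) : R :=
  \sum_(i < n) (v ord0 i) ^+ 2.
Definition disk {R : realType} (n : nat) : set 'rV[R]_n := [set v | sqnorm v <= 1].
Definition sphere {R : realType} (n : nat) : set 'rV[R]_n := [set v | sqnorm v = 1].
Definition odisk {R : realType} (n : nat) : set 'rV[R]_n := [set v | sqnorm v < 1].
Arguments disk {R} n _.
Arguments sphere {R} n _.
Arguments odisk {R} n _.

(** (Sb,cb) is obtained from (Sa,ca) by attaching an n-cell, with attaching map
   phi : S^{n-1} -> Sa and characteristic map Phi : D^n -> Sb, the inclusion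
   Sa -> Sb being the identity of T: Sa is a subspace of Sb and the square
   is a pushout in PsTop (universal property). *)
Definition pushout_med {R : realType} {T U : Type} (n : nat)
  (Sa Sb : set T) (cb : convT T) (Phi : 'rV[R]_n -> T)
  (B : set U) (d : convT U) (g : T -> U) (h : 'rV[R]_n -> U) (k : T -> U) : Prop :=
  cont Sb cb B d k /\ (forall y, Sa y -> k y = g y) /\
  (forall v, disk n v -> k (Phi v) = h v).

Definition attaches {R : realType} {T : Type} (Sa : set T) (ca : convT T)
  (Sb : set T) (cb : convT T) (n : nat) (phi Phi : 'rV[R]_n -> T) : Prop :=
  Sa `<=` Sb /\
  (forall F x, ca F x <-> subsp cb Sa F x) /\
  cont (sphere n) (topc (sphere n)) Sa ca phi /\
  cont (disk n) (topc (disk n)) Sb cb Phi /\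
  (forall v, sphere n v -> Phi v = phi v) /\
  (forall (U : Type) (B : set U) (d : convT U) (g : T -> U) (h : 'rV[R]_n -> U),
     is_pstop B d -> cont Sa ca B d g -> cont (disk n) (topc (disk n)) B d h ->
     (forall v, sphere n v -> h v = g (phi v)) ->
     (exists k, pushout_med Sa Sb cb Phi B d g h k) /\
     (forall k1 k2, pushout_med Sa Sb cb Phi B d g h k1 ->
                    pushout_med Sa Sb cb Phi B d g h k2 ->
                    forall y, Sb y -> k1 y = k2 y)).

Definition colim_med {I T U : Type} (J : set I) (S : I -> set T)
  (Sb : set T) (cb : convT T) (B : set U) (d : convT U)
  (g : I -> T -> U) (k : T -> U) : Prop :=
  cont Sb cb B d k /\ (forall i, J i -> forall y, S i y -> k y = g i y).

Definition is_colim {I T : Type} (lt : I -> I -> Prop) (J : set I)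
  (S : I -> set T) (c : I -> convT T) (Sb : set T) (cb : convT T) : Prop :=
  (forall i, J i -> cont (S i) (c i) Sb cb id) /\
  (forall (U : Type) (B : set U) (d : convT U) (g : I -> T -> U),
     is_pstop B d ->
     (forall i, J i -> cont (S i) (c i) B d (g i)) ->
     (forall i j, J i -> J j -> lt i j -> forall y, S i y -> g j y = g i y) ->
     (exists k, colim_med J S Sb cb B d g k) /\
     (forall k1 k2, colim_med J S Sb cb B d g k1 -> colim_med J S Sb cb B d g k2 ->
        forall y, Sb y -> k1 y = k2 y)).

Definition is_pred {I : Type} (lt : I -> I -> Prop) (i j : I) : Prop :=
  lt i j /\ forall k, lt k j -> k = i \/ lt k i.

(** A presentation of the pseudotopological space Y = (setT, cY) on T as a
   relative cell complex relative to the subspace X : set T: a transfinite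
   sequence (indexed by a well-ordered type) of stages (stage i, sconv i),
   all subsets of T with inclusions as transition maps, stage i0 = X (with its
   subspace structure), successor stages obtained by attaching one cell,
   limit stages colimits, and Y the colimit of the whole sequence. *)
Record rel_cell_complex (R : realType) (T : Type) (cY : convT T) (X : set T) := {
  idx : Type;
  ilt : idx -> idx -> Prop;
  ilt_irrefl : forall i, ~ ilt i i;
  ilt_trans : forall i j k, ilt i j -> ilt j k -> ilt i k;
  ilt_total : forall i j, ilt i j \/ i = j \/ ilt j i;
  ilt_wf : well_founded ilt;
  i0 : idx;
  i0_least : forall i, i = i0 \/ ilt i0 i;
  stage : idx -> set T;
  sconv : idx -> convT T;
  stage_pstop : forall i, is_pstop (stage i) (sconv i);
  stage_incl : forall i j, ilt i j ->
     stage i `<=` stage j /\ cont (stage i) (sconv i) (stage j) (sconv j) id;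
  stage0_set : stage i0 = X;
  stage0_conv : forall F x, sconv i0 F x <-> subsp cY X F x;
  dim : idx -> nat;
  att : forall j, 'rV[R]_(dim j) -> T;
  chr : forall j, 'rV[R]_(dim j) -> T;
  succ_step : forall i j, is_pred ilt i j ->
     @attaches R T (stage i) (sconv i) (stage j) (sconv j) (dim j) (@att j) (@chr j);
  limit_step : forall j, j <> i0 -> (forall i, ~ is_pred ilt i j) ->
     is_colim ilt [set i | ilt i j] stage sconv (stage j) (sconv j);
  final_colim : is_colim ilt setT stage sconv setT cY
}.
Arguments att {R T cY X} r j _.
Arguments chr {R T cY X} r j _.
Arguments dim {R T cY X} r j.

(** The cells of Y - X are indexed by the successor indices j; the interior
    of the cell j is chr j (D^n \ S^{n-1}). *)
Definition is_cell_idx {R T cY X} (P : @rel_cell_complex R T cY X) (j : idx P) : Prop :=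
  exists i, is_pred (@ilt _ _ _ _ P) i j.

Definition cell_interior {R T cY X} (P : @rel_cell_complex R T cY X) (j : idx P) : set T :=
  [set chr P j v | v in odisk (dim P j)].

Definition compactP {T : Type} (c : convT T) (C : set T) : Prop :=
  forall U, ultra U -> U C -> exists x, subsp c C U x.
Arguments is_cell_idx {R T cY X} P j.
Arguments cell_interior {R T cY X} P j _.

(* Main.v *)
Require Import Defs.
From mathcomp Require Import all_boot all_order all_algebra.
From mathcomp Require Import all_classical all_reals topology normedtype.
Local Open Scope classical_set_scope.
Import Order.TTheory GRing.Theory Num.Theory.
Import numFieldNormedType.Exports.

Set Implicit Arguments. Unset Strict Implicit.
Local Notation pfilter := Defs.pfilter.
Local Notation dim := Defs.dim.

Section Filt.
Context {T : Type}.
Implicit Types F G : set_system T.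

Lemma pfilter_PF F : pfilter F -> ProperFilter F.
Proof. by move=> [FT [F0 [FI FS]]]; split => //; split. Qed.

Lemma PF_pfilter F : ProperFilter F -> pfilter F.
Proof.
move=> PF; split; first exact: filterT.
split; first exact: filter_not_empty.
split; [move=> A B; exact: filterI | move=> A B; exact: filterS].
Qed.

Lemma ultra_ext F : pfilter F -> exists U, ultra U /\ F `<=` U.
Proof.
move=> /pfilter_PF PF; have [G [UG FG]] := ultraFilterLemma PF.
exists G; split; last exact: FG.
split; first exact: (PF_pfilter (@ultra_proper _ _ UG)).
move=> H /pfilter_PF PH GH; exact: (@max_filter _ _ UG H PH GH).
Qed.

Lemma pf_up F A B : pfilter F -> A `<=` B -> F A -> F B.
Proof. by move=> [_ [_ [_ FS]]]; apply: FS. Qed.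

Lemma pf_I F A B : pfilter F -> F A -> F B -> F (A `&` B).
Proof. by move=> [_ [_ [FI _]]]; apply: FI. Qed.

Lemma pf_T F : pfilter F -> F setT.
Proof. by case. Qed.

Lemma pf_0 F : pfilter F -> ~ F set0.
Proof. by move=> [_ []]. Qed.

Lemma principal_pfilter (x : T) : pfilter (principal x).
Proof.
rewrite /principal; split => //; split => //; split.
  by move=> A B ? ?; split.
by move=> A B AB /AB.
Qed.

Lemma principal_ultra (x : T) : ultra (principal x).
Proof.
split; first exact: principal_pfilter.
move=> G pG sG; apply/funext => Z; apply/propext; split; last exact: sG.
move=> GZ; apply: contrapT => nZ; apply: (pf_0 pG).
apply: (pf_up pG _ (pf_I pG GZ (sG [set x] erefl))).
by move=> z [Zz zx]; apply: nZ; rewrite -zx.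
Qed.

Lemma imf_pfilter U (f : T -> U) F : pfilter F -> pfilter (imf f F).
Proof.
move=> [FT [F0 [FI FS]]]; split; first exact: FT.
split; first exact: F0.
split; first by move=> A B; exact: FI.
by move=> A B AB; apply: FS => y; exact: AB.
Qed.
End Filt.

Definition indisc : convT bool := fun F _ => pfilter F.

Lemma indisc_pstop : is_pstop setT indisc.
Proof.
split; first split.
- by move=> F x pF; split => //; split => //; exact: pf_T.
- by split; [move=> F G x _ pG _ | move=> x _; exact: principal_pfilter].
by move=> F x pF _ _; split => [_ U [pU _] _|_].
Qed.

Definition sierp : convT bool := fun F b => pfilter F /\ (b -> F [set true]).

Lemma sierp_pstop : is_pstop setT sierp.
Proof.
split; first split.
- by move=> F x [pF _]; split => //; split => //; exact: pf_T.
- split.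
  + by move=> F G x [pF h] pG FG; split => // /h /FG.
  + by move=> x _; split; [exact: principal_pfilter | move=> ->].
move=> F b pF _ _; split.
  by move=> [_ h] U [pU _] FU; split => // /h /FU.
move=> hU; split => // hb; apply: contrapT => nF.
have sub : F `<=` principal false.
  move=> Z FZ; apply: contrapT => nZ; apply: nF; apply: (pf_up pF _ FZ).
  by case=> // /nZ.
by have [_ /(_ hb)] := hU _ (principal_ultra false) sub.
Qed.

Lemma colim_cover (Ix : Type) T (lt : Ix -> Ix -> Prop) J (S : Ix -> set T) c Sb cb :
  (forall i, J i -> forall F x, c i F x -> pfilter F) ->
  (forall F x, cb F x -> pfilter F) ->
  is_colim lt J S c Sb cb -> forall y, Sb y -> exists i, J i /\ S i y.
Proof.
move=> hc hcb [_ univ] y Sby; apply: contrapT => hy.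
have [_ uniq] := univ bool setT indisc (fun _ _ => false) indisc_pstop
  (fun i Ji => conj (fun _ _ => I) (fun F x cF => imf_pfilter _ (hc i Ji F x cF)))
  (fun _ _ _ _ _ _ _ => erefl).
pose k2 := fun z => `[< ~ exists i, J i /\ S i z >].
have m1 : colim_med J S Sb cb setT indisc (fun _ _ => false) (fun _ => false).
  split => //; split => // F x cF; exact: imf_pfilter (hcb F x cF).
have m2 : colim_med J S Sb cb setT indisc (fun _ _ => false) k2.
  split; first by split => // F x cF; exact: imf_pfilter (hcb F x cF).
  by move=> i Ji z Siz; apply/asboolF => /(_ (ex_intro _ i (conj Ji Siz))).
have := uniq _ _ m1 m2 y Sby.
by rewrite /k2 asboolT.
Qed.

Lemma attach_cover (R : realType) T (Sa Sb : set T) ca cb n (phi Phi : 'rV[R]_n -> T) :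
  (forall F x, ca F x -> pfilter F) ->
  (forall F x, cb F x -> pfilter F) ->
  attaches Sa ca Sb cb phi Phi ->
  forall y, Sb y -> Sa y \/ exists v, disk n v /\ Phi v = y.
Proof.
move=> hca hcb [_ [_ [_ [_ [_ univ]]]]] y Sby; apply: contrapT => hy.
have [_ uniq] := univ bool setT indisc (fun _ => false) (fun _ => false) indisc_pstop
  (conj (fun _ _ => I) (fun F x cF => imf_pfilter _ (hca F x cF)))
  (conj (fun _ _ => I) (fun F x cF => imf_pfilter _ (proj1 cF)))
  (fun _ _ => erefl).
pose k2 := fun z => `[< ~ (Sa z \/ exists v, disk n v /\ Phi v = z) >].
have m1 : pushout_med Sa Sb cb Phi setT indisc (fun _ => false) (fun _ => false) (fun _ => false).
  split => //; split => // F x cF; exact: imf_pfilter (hcb F x cF).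
have m2 : pushout_med Sa Sb cb Phi setT indisc (fun _ => false) (fun _ => false) k2.
  split; first by split => // F x cF; exact: imf_pfilter (hcb F x cF).
  split.
    by move=> z Saz; apply/asboolF => /(_ (or_introl Saz)).
  by move=> v dv; apply/asboolF => /(_ (or_intror (ex_intro _ v (conj dv erefl)))).
have := uniq _ _ m1 m2 y Sby.
by rewrite /k2 asboolT.
Qed.

Section Rn.
Context {R : realType}.
Local Open Scope ring_scope.

Lemma nbhs_neq n (v w : 'rV[R]_n) : v <> w -> nbhs v (~` [set w]).
Proof.
move=> vw; apply: open_nbhs_nbhs; split => //.
rewrite openC; apply: accessible_closed_set1; apply: hausdorff_accessible.
exact: norm_hausdorff.
Qed.

Lemma nbhs_subsing n (E : set 'rV[R]_n) v :
  (forall a b, E a -> E b -> a = b) -> ~ E v -> nbhs v (~` E).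
Proof.
move=> sE nEv; have [[w Ew]|nE] := pselect (exists w, E w).
  apply: filterS (nbhs_neq (_ : v <> w)).
    by move=> u uw Eu; apply: uw; exact: sE.
  by move=> vw; apply: nEv; rewrite vw.
by apply: filterS (@filterT _ _ _) => u _ Eu; apply: nE; exists u.
Qed.

Lemma sqnorm_cont n : continuous (@sqnorm R n).
Proof.
rewrite /sqnorm.
suff H : forall r : seq 'I_n,
    continuous (fun v : 'rV[R]_n => \sum_(i <- r) v ord0 i ^+ 2) by exact: H.
elim => [|a r IH] x.
  rewrite (_ : (fun v : 'rV[R]_n => _) = fun=> 0); last first.
    by apply/funext => v; rewrite big_nil.
  exact: cst_continuous.
have H1 : {for x, continuous (fun v : 'rV[R]_n => v ord0 a * v ord0 a)}.
  by apply: continuousM; apply: (@coord_continuous R 1 n ord0 a).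
have := continuousD H1 (IH x).
congr (continuous_at x _); apply/funext => v /=.
by rewrite big_cons expr2.
Qed.

Lemma odisk_open n : open (odisk n : set 'rV[R]_n).
Proof.
rewrite (_ : odisk n = sqnorm @^-1` [set x | x < 1]) //.
apply: open_comp; [move=> x _; exact: sqnorm_cont | exact: open_lt].
Qed.

Lemma disk_split n (v : 'rV[R]_n) : disk n v -> sphere n v \/ odisk n v.
Proof.
rewrite /disk /sphere /odisk /= le_eqVlt => /orP[/eqP ->|->]; by [left|right].
Qed.

Lemma sphere_odisk n (v : 'rV[R]_n) : sphere n v -> ~ odisk n v.
Proof. by rewrite /sphere /odisk /= => ->; rewrite ltxx. Qed.

Lemma odisk_disk n (v : 'rV[R]_n) : odisk n v -> disk n v.
Proof. by rewrite /disk /odisk /=; exact: ltW. Qed.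
End Rn.

Lemma attach_cell (R : realType) T (Sa Sb : set T) ca cb n (phi Phi : 'rV[R]_n -> T) :
  (forall F x, ca F x -> pfilter F) ->
  attaches Sa ca Sb cb phi Phi -> forall w, odisk n w ->
  ~ Sa (Phi w) /\ (forall u, disk n u -> Phi u = Phi w -> u = w).
Proof.
move=> hca [_ [_ [_ [_ [_ univ]]]]] w ow.
pose h := fun u : 'rV[R]_n => `[< u <> w >].
have ch : cont (disk n) (topc (disk n)) setT sierp h.
  split => // F v [pF [Fd [dv nF]]]; split; first exact: imf_pfilter.
  move=> /asboolP vw; apply: (pf_up pF _ (nF _ (nbhs_neq vw))).
  by move=> u uw; apply/asboolP.
have cg : cont Sa ca setT sierp (fun _ => true).
  split => // F x cF; split; first exact: imf_pfilter (hca _ _ cF).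
  by move=> _; apply: (pf_up (hca _ _ cF) _ (pf_T (hca _ _ cF))).
have comp : forall v, sphere n v -> h v = (fun _ => true) (phi v).
  move=> v sv; apply/asboolP => vw; apply: (sphere_odisk sv); by rewrite vw.
have [[k [_ [kg kh]]] _] := univ bool setT sierp _ h sierp_pstop cg ch comp.
have kw : k (Phi w) = false.
  rewrite kh; last exact: odisk_disk.
  by apply/asboolF; apply.
split; first by move=> /kg; rewrite kw.
move=> u du e; have := kh u du; rewrite e kw => hu.
by apply: contrapT => uw; rewrite /h asboolT in hu.
Qed.

Definition dS {T} (S : set T) : convT T := fun F y => pfilter F /\ F (~` (S `\ y)).

Lemma dS_pstop T (S : set T) : is_pstop setT (dS S).
Proof.
split; first split.
- by move=> F x [pF _]; split => //; split => //; exact: pf_T.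
- split.
  + by move=> F G x [pF h] pG FG; split => //; exact: FG.
  + by move=> x _; split; [exact: principal_pfilter | move=> [_]; apply].
move=> F x pF _ _; split.
  by move=> [_ h] U [pU _] FU; split => //; exact: FU.
move=> hU; split => //; apply: contrapT => nF.
set A := ~` (S `\ x) in nF *.
pose G := [set Z | exists2 Y, F Y & Y `&` ~` A `<=` Z].
have pG : pfilter G.
  split; first by exists setT => //; exact: pf_T.
  split.
    move=> [Y FY sY]; apply: nF; apply: (pf_up pF _ FY) => y Yy.
    by apply: contrapT => nA; exact: (sY y (conj Yy nA)).
  split.
    move=> Z1 Z2 [Y1 F1 s1] [Y2 F2 s2]; exists (Y1 `&` Y2); first exact: pf_I.
    by move=> y [[y1 y2] nA]; split; [exact: s1|exact: s2].
  by move=> Z1 Z2 s [Y FY sY]; exists Y => // y /sY /s.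
have [U [uU GU]] := ultra_ext pG.
have FU : F `<=` U by move=> Z FZ; apply: GU; exists Z => // y [].
have [pU _] := uU.
have [_ UA] := hU U uU FU.
have UnA : U (~` A) by apply: GU; exists setT; [exact: pf_T | move=> y []].
by apply: (pf_0 pU); apply: (pf_up pU _ (pf_I pU UA UnA)) => y [].
Qed.

Lemma transfer T (S : set T) (Sb : set T) (cb : convT T) k :
  (forall F x, cb F x -> pfilter F /\ F Sb /\ Sb x) ->
  cont Sb cb setT (dS S) k -> (forall y, Sb y -> k y = y) ->
  cont Sb cb setT (dS S) id.
Proof.
move=> hcb [_ kc] ky; split => // F y cF.
have [pF [FSb Sby]] := hcb _ _ cF.
have [_ Fk] := kc _ _ cF.
split; first exact: pF.
apply: (pf_up pF _ (pf_I pF Fk FSb)) => u [hu Sbu].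
by rewrite -(ky u Sbu) -(ky y Sby).
Qed.

Lemma Phi_cont (R : realType) T (S : set T) n (phi Phi : 'rV[R]_n -> T) :
  (forall G v, topc (sphere n) G v -> G (phi @^-1` (~` (S `\ phi v)))) ->
  (forall v, sphere n v -> Phi v = phi v) ->
  (forall u u', odisk n u -> odisk n u' -> S (Phi u) -> S (Phi u') -> u = u') ->
  forall F v, topc (disk n) F v -> dS S (imf Phi F) (Phi v).
Proof.
move=> hphi hPhi hinj F v [pF [Fd [dv nF]]]; split; first exact: imf_pfilter.
pose E := [set u | odisk n u /\ S (Phi u)].
have sE : forall a b, E a -> E b -> a = b.
  by move=> a b [oa Sa] [ob Sb]; exact: hinj.
case: (disk_split dv) => [sv|ov].
  pose G := [set Z | exists2 N, nbhs v N & N `&` sphere n `<=` Z].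
  have tG : topc (sphere n) G v.
    split; last split; last split => //.
    - split; first by exists setT => //; try exact: filterT.
      split.
        move=> [N Nv sN]; exact: (sN v (conj (nbhs_singleton Nv) sv)).
      split.
        move=> Z1 Z2 [N1 n1 s1] [N2 n2 s2]; exists (N1 `&` N2); first exact: filterI.
        by move=> y [[y1 y2] sy]; split; [exact: s1|exact: s2].
      by move=> Z1 Z2 s [N Nv sN]; exists N => // y /sN /s.
    - by exists setT; [exact: filterT | move=> y []].
    - by move=> N Nv; exists N.
  have [N Nv sN] := hphi G v tG.
  have nE : nbhs v (~` E) by apply: nbhs_subsing => // [[ov _]]; exact: sphere_odisk sv ov.
  apply: (pf_up pF _ (pf_I pF (pf_I pF (nF _ Nv) (nF _ nE)) Fd)).
  move=> u [[Nu nEu] du] [SPu neq].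
  case: (disk_split du) => [su|ou].
    have := sN u (conj Nu su); rewrite /= -!hPhi //; apply; split => //.
  by apply: nEu; split.
have nE : nbhs v (~` (E `\ v)).
  apply: nbhs_subsing; last by move=> [_ nv]; apply: nv.
  by move=> a b [Ea _] [Eb _]; exact: sE.
have no : nbhs v (odisk n) by apply: open_nbhs_nbhs; split => //; exact: odisk_open.
apply: (pf_up pF _ (pf_I pF (nF _ no) (nF _ nE))).
move=> u [ou nEu] [SPu neq]; apply: nEu; split; first by split.
by move=> uv; apply: neq; rewrite uv.
Qed.

Section Complex.
Variables (R : realType) (T : Type) (cY : convT T) (X : set T).
Hypothesis HY : is_pstop setT cY.
Variable P : rel_cell_complex R cY X.
Local Notation st := (@stage _ _ _ _ P).
Local Notation sc := (@sconv _ _ _ _ P).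
Local Notation ltP := (@ilt _ _ _ _ P).

Lemma stage_pf i F x : sc i F x -> pfilter F /\ F (st i) /\ st i x.
Proof. by have [[h _] _] := @stage_pstop _ _ _ _ P i; move/h. Qed.

Lemma stage_le i j : i = j \/ @ilt _ _ _ _ P i j -> st i `<=` st j.
Proof. by case=> [->//|/(@stage_incl _ _ _ _ P _ _) []]. Qed.

Lemma cellfact i j u : is_pred ltP i j -> odisk (dim P j) u ->
  st j (chr P j u) /\ ~ st i (chr P j u).
Proof.
move=> hij ou; have att := @succ_step _ _ _ _ P _ _ hij.
have [_ [_ [_ [[h _] _]]]] := att.
split; first exact/h/odisk_disk.
have [] := attach_cell (fun F x c => proj1 (stage_pf c)) att ou; by [].
Qed.

Lemma same_cell i j i' j' y : is_pred ltP i j ->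
  is_pred ltP i' j' ->
  st j y -> ~ st i y -> st j' y -> ~ st i' y -> j = j'.
Proof.
move=> hij hij' sj si sj' si'.
case: (@ilt_total _ _ _ _ P j j') => [hl|[//|hl]].
  by exfalso; apply: si'; apply: (stage_le (hij'.2 j hl)).
by exfalso; apply: si; apply: (stage_le (hij.2 j' hl)).
Qed.

Variable S : set T.
Hypothesis SX : forall y, S y -> ~ X y.
Hypothesis Scell : forall i j, is_pred ltP i j ->
  forall u u', odisk (dim P j) u -> odisk (dim P j) u' ->
  S (chr P j u) -> S (chr P j u') -> chr P j u = chr P j u'.

Lemma stage_cont : forall i, cont (st i) (sc i) setT (dS S) id.
Proof.
elim/(well_founded_ind (@ilt_wf _ _ _ _ P)) => j IH.
have [->|nj0] := pselect (j = i0 P).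
  split => // F y cF; have [pF _] := stage_pf cF.
  have [FX [Xy _]] := (stage0_conv P F y).1 cF.
  split => //; apply: (pf_up pF _ FX) => z Xz [Sz _]; exact: SX Sz Xz.
have [[i hij]|npred] := pselect (exists i, is_pred ltP i j).
  have att := @succ_step _ _ _ _ P _ _ hij.
  have hca : forall F x, sc i F x -> pfilter F := fun F x c => proj1 (stage_pf c).
  have hcb : forall F x, sc j F x -> pfilter F := fun F x c => proj1 (stage_pf c).
  have [SaSb [caE [phic [Phic [PhiS univ]]]]] := att.
  have IHi := IH i hij.1.
  have contPhi : cont (disk (dim P j)) (topc (disk (dim P j))) setT (dS S) (chr P j).
    split => //; apply: Phi_cont PhiS _.
    - move=> G v tG; have [_ pc] := phic; have := pc _ _ tG.
      by have [_ ic] := IHi => /ic [].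
    - move=> u u' ou ou' Su Su'; have e := Scell hij ou ou' Su Su'.
      have [_ inj] := attach_cell hca att ou'.
      exact: (inj u (odisk_disk ou) e).
  have [[k [kc [kg kh]]] _] := univ T setT (dS S) id (chr P j) (@dS_pstop T S) IHi contPhi PhiS.
  apply: (transfer _ kc) => [F x c|y sy]; first exact: stage_pf c.
  case: (attach_cover hca hcb att sy) => [Say|[v [dv <-]]]; first exact: kg.
  exact: kh.
have npred' : forall i, ~ is_pred ltP i j by move=> i hi; apply: npred; exists i.
have [incl univ] := @limit_step _ _ _ _ P _ nj0 npred'.
have [[k [kc kid]] _] := univ T setT (dS S) (fun _ => id) (@dS_pstop T S)
  (fun i lti => IH i lti) (fun _ _ _ _ _ _ _ => erefl).
apply: (transfer _ kc) => [F x c|y sy]; first exact: stage_pf c.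
have [i [lti siy]] := colim_cover (fun i _ F x c => proj1 (@stage_pf i F x c))
  (fun F x c => proj1 (stage_pf c)) (@limit_step _ _ _ _ P _ nj0 npred') sy.
exact: kid lti y siy.
Qed.

Lemma final_cont F y : cY F y -> dS S F y.
Proof.
move=> cF.
have [incl univ] := final_colim P.
have [[k [kc kid]] _] := univ T setT (dS S) (fun _ => id) (@dS_pstop T S)
  (fun i _ => stage_cont i) (fun _ _ _ _ _ _ _ => erefl).
have hcb : forall F x, cY F x -> pfilter F /\ F setT /\ setT x.
  by have [[h _] _] := HY.
have ky : forall z, setT z -> k z = z.
  move=> z _.
  have [i [_ siy]] := colim_cover (fun i _ F x c => proj1 (@stage_pf i F x c))
    (fun F x c => proj1 (hcb F x c)) (final_colim P) (I : setT z).
  exact: kid I z siy.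
have [_ c] := transfer hcb kc ky.
exact: c _ _ cF.
Qed.
End Complex.

Theorem mainTheorem8 (R : realType) (T : Type) (cY : convT T) (X : set T)
  (HY : is_pstop setT cY) (P : rel_cell_complex R cY X) (C : set T) :
  compactP cY C ->
  finite_set [set j : idx P | is_cell_idx P j /\ cell_interior P j `&` C !=set0].
Proof.
move=> cC.
set J := [set j : idx P | _].
have [//|nfin] := pselect (finite_set J).
exfalso.
pose w := fun j : idx P =>
  match pselect (exists v : 'rV[R]_(dim P j), odisk (dim P j) v /\ C (chr P j v)) with
  | left h => projT1 (cid h) | right _ => 0%R end.
have hw : forall j, J j -> odisk (dim P j) (w j) /\ C (chr P j (w j)).
  move=> j [_ [y [[v ov <-] Cy]]]; rewrite /w; case: pselect => [h|h].
    exact: (projT2 (cid h)).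
  by exfalso; apply: h; exists v.
pose x := fun j => chr P j (w j).
pose S := [set x j | j in J].
have xcell : forall j, J j -> exists i, is_pred (@ilt _ _ _ _ P) i j /\
    @stage _ _ _ _ P j (x j) /\ ~ @stage _ _ _ _ P i (x j).
  move=> j Jj; have [i hij] := Jj.1; exists i; split => //.
  exact: (cellfact hij (hw j Jj).1).
have xinj : forall j j', J j -> J j' -> x j = x j' -> j = j'.
  move=> j j' Jj Jj' e.
  have [i [hij [s1 s2]]] := xcell j Jj.
  have [i' [hij' [s1' s2']]] := xcell j' Jj'.
  rewrite -e in s1' s2'.
  exact: (same_cell hij hij' s1 s2 s1' s2').
have SX : forall y, S y -> ~ X y.
  move=> y [j Jj <-] Xy; have [i [hij [_ ni]]] := xcell j Jj.
  apply: ni; rewrite -(stage0_set P) in Xy; apply: (stage_le _ Xy).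
  by case: (i0_least i) => [->|h]; [left|right].
have Scell : forall i j, is_pred (@ilt _ _ _ _ P) i j ->
    forall u u', odisk (dim P j) u -> odisk (dim P j) u' ->
    S (chr P j u) -> S (chr P j u') -> chr P j u = chr P j u'.
  move=> i j hij u u' ou ou' [j1 J1 e1] [j2 J2 e2].
  have [c1 c2] := cellfact hij ou.
  have [c1' c2'] := cellfact hij ou'.
  have [i1 [h1 [s1 s2]]] := xcell j1 J1.
  have [i2 [h2 [t1 t2]]] := xcell j2 J2.
  rewrite e1 in s1 s2; rewrite e2 in t1 t2.
  have E1 := same_cell hij h1 c1 c2 s1 s2.
  have E2 := same_cell hij h2 c1' c2' t1 t2.
  subst j1 j2; by rewrite -e1 -e2.
have finS : ~ finite_set S.
  move=> fS; apply: nfin.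
  pose g := fun y => match pselect (exists j, J j /\ x j = y) with
    | left h => projT1 (cid h) | right _ => i0 P end.
  apply: (sub_finite_set _ (finite_image g fS)).
  move=> j Jj; exists (x j); first by exists j.
  rewrite /g; case: pselect => [h|h]; last by exfalso; apply: h; exists j.
  have [Jj' e] := projT2 (cid h).
  exact: xinj Jj' Jj e.
pose F0 := [set Z | exists2 E, finite_set E & S `\` E `<=` Z].
have pF0 : pfilter F0.
  split; first by exists set0 => //; exact: finite_set0.
  split.
    move=> [E fE sE]; apply: finS; apply: (sub_finite_set _ fE) => y Sy.
    by apply: contrapT => nE; exact: (sE y (conj Sy nE)).
  split.
    move=> Z1 Z2 [E1 f1 s1] [E2 f2 s2]; exists (E1 `|` E2).
      by rewrite finite_setU.
    move=> y [Sy nE]; split; [apply: s1|apply: s2]; split => // ?; apply: nE; by [left|right].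
  by move=> Z1 Z2 s [E fE sE]; exists E => // y /sE /s.
have [U [uU FU]] := ultra_ext pF0.
have UC : U C.
  apply: FU; exists set0; first exact: finite_set0.
  by move=> y [[j Jj <-] _]; exact: (hw j Jj).2.
have [x0 [_ [_ cU]]] := cC U uU UC.
have [pU UA] := final_cont HY SX Scell cU.
have UB : U (S `\ x0) by apply: FU; exists [set x0]; [exact: finite_set1 | by []].
by apply: (pf_0 pU); apply: (pf_up pU _ (pf_I pU UA UB)) => y [nA B]; apply: nA.
Qed.
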